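(* Let $q=2^m$ with $m\ge 4$ even. Then the incidence structure $(U_{q+1},\mathcal B_4(\mathcal C_{\{3,5\}}^\perp|_{\mathrm{GF}(q)}))$ formed by the supports of the minimum-weight codewords of $\mathcal C_{\{3,5\}}^\perp|_{\mathrm{GF}(q)}$ is a $3$-$(q+1,4,2)$ design.
   Context: $U_{q+1}$ is the set of $(q+1)$-th roots of unity in $\mathrm{GF}(q^2)$; coordinates are indexed by $U_{q+1}$. $\mathcal C_{\{3,5\}}=\{(a_3u^3+a_{q-2}u^{q-2}+a_5u^5+a_{q-4}u^{q-4})_{u\in U_{q+1}}: a_i\in\mathrm{GF}(q^2)\}$, $\mathcal C_{\{3,5\}}^\perp$ its dual under the standard inner product, $\mathcal C^\perp_{\{3,5\}}|_{\mathrm{GF}(q)}=\mathcal C^\perp_{\{3,5\}}\cap\mathrm{GF}(q)^{q+1}$ (its minimum distance is $4$). $\mathcal B_4(\mathcal C)$ is the set of supports of weight-$4$ codewords. A $t$-$(v,k,\lambda)$ design: $v$ points, blocks of size $k$, every $t$ points in exactly $\lambda$ blocks. *)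

(* Defs.v *)
From HB Require Import structures.
From mathcomp Require Import all_boot all_order all_algebra all_field.
Set Implicit Arguments. Unset Strict Implicit. Unset Printing Implicit Defensive.
Import GRing.Theory.
Local Open Scope ring_scope.

(* F plays the role of GF(q^2); GF(q) is the subfield {x | x^q = x}. *)

Definition Uroots (F : finFieldType) (q : nat) : {set F} :=
  [set u : F | u ^+ q.+1 == 1].

(* Vectors indexed by U_{q+1} are modelled as finite functions F -> F that
   vanish outside U_{q+1}. *)
Definition supported_on_U (F : finFieldType) (q : nat) (c : {ffun F -> F}) : bool :=
  [forall u, (u \notin Uroots F q) ==> (c u == 0)].

(* The codeword of C_{3,5} with coefficients (a3, a_{q-2}, a5, a_{q-4}),
   evaluated at u. *)
Definition C35_coord (F : finFieldType) (q : nat) (a3 aq2 a5 aq4 : F) (u : F) : F :=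
  a3 * u ^+ 3 + aq2 * u ^+ (q - 2) + a5 * u ^+ 5 + aq4 * u ^+ (q - 4).

Definition in_C35_dual (F : finFieldType) (q : nat) (c : {ffun F -> F}) : bool :=
  supported_on_U q c &&
  [forall a3 : F, forall aq2 : F, forall a5 : F, forall aq4 : F,
     \sum_(u in Uroots F q) c u * C35_coord q a3 aq2 a5 aq4 u == 0].

Definition in_C35_dual_GFq (F : finFieldType) (q : nat) (c : {ffun F -> F}) : bool :=
  in_C35_dual q c && [forall u, c u ^+ q == c u].

Definition supp (F : finFieldType) (c : {ffun F -> F}) : {set F} :=
  [set u | c u != 0].

Definition B4_C35_dual_GFq (F : finFieldType) (q : nat) : {set {set F}} :=
  [set B : {set F} | [exists c : {ffun F -> F},
      [&& in_C35_dual_GFq q c, B == supp c & #|supp c| == 4%N]]].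

Definition is_design (T : finType) (t v k lambda : nat)
  (P : {set T}) (Bl : {set {set T}}) : Prop :=
  #|P| = v /\
  (forall b, b \in Bl -> b \subset P /\ #|b| = k) /\
  (forall S : {set T}, S \subset P -> #|S| = t ->
      #|[set b in Bl | S \subset b]| = lambda).

(* Main.v *)
Require Import Defs.
From mathcomp Require Import all_boot all_order all_algebra all_field.
From mathcomp Require Import ring zify.
Set Implicit Arguments. Unset Strict Implicit. Unset Printing Implicit Defensive.
Import GRing.Theory.
Local Open Scope ring_scope.
Set Default Proof Using "All".

Section Char2.
Variable F : fieldType.
Hypothesis ch2 : 2%N \in [pchar F].

Lemma two0 : (2%:R : F) = 0. Proof. exact: pcharf0 ch2. Qed.

Lemma mod2 (x y r : F) : x = y + r * 2%:R -> x = y.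
Proof. by rewrite two0 mulr0 addr0. Qed.

Lemma det2 (a b c d e1 e2 : F) : e1 * a + e2 * b = 0 -> e1 * c + e2 * d = 0 ->
  (e1 != 0 \/ e2 != 0) -> a * d - b * c = 0.
Proof.
move=> h1 h2 [] hn.
  apply: (mulfI hn). rewrite mulr0.
  have -> : e1 * (a * d - b * c) = d * (e1 * a + e2 * b) - b * (e1 * c + e2 * d) by ring.
  by rewrite h1 h2; ring.
apply: (mulfI hn). rewrite mulr0.
have -> : e2 * (a * d - b * c) = a * (e1 * c + e2 * d) - c * (e1 * a + e2 * b) by ring.
by rewrite h1 h2; ring.
Qed.

Lemma ker2 (a b c d : F) : a * d - b * c = 0 ->
  exists e1 e2 : F, (e1 != 0 \/ e2 != 0) /\ e1 * a + e2 * b = 0 /\ e1 * c + e2 * d = 0.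
Proof.
move=> h.
have [ab0|abn] := boolP ((a == 0) && (b == 0)).
  case/andP: ab0 => /eqP a0 /eqP b0.
  have [cd0|cdn] := boolP ((c == 0) && (d == 0)).
    case/andP: cd0 => /eqP c0 /eqP d0.
    exists 1, 0; split; first by left; exact: oner_neq0.
    by rewrite a0 b0 c0 d0; split; ring.
  exists d, (- c); split.
    by move: cdn; rewrite negb_and => /orP [] hh; [right; rewrite oppr_eq0|left].
  by rewrite a0 b0; split; ring.
exists b, (- a); split.
  by move: abn; rewrite negb_and => /orP [] hh; [right; rewrite oppr_eq0|left].
split; first by ring.
have -> : b * c + - a * d = - (a * d - b * c) by ring.
by rewrite h oppr0.
Qed.

Definition G4 (a b : F) := a^+3 + a^+2*b + a*b^+2 + b^+3.
Definition G5 (a b : F) := a^+4 + a^+3*b + a^+2*b^+2 + a*b^+3 + b^+4.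

Lemma weight3 (z1 z2 z3 d1 d2 d3 : F) : z1 != z2 -> z1 != z3 -> z2 != z3 ->
  d1 + d2 + d3 = 0 -> d1 * z1 + d2 * z2 + d3 * z3 = 0 ->
  d1 * z1^+4 + d2 * z2^+4 + d3 * z3^+4 = 0 ->
  d1 * z1^+5 + d2 * z2^+5 + d3 * z3^+5 = 0 ->
  [/\ d1 = 0, d2 = 0 & d3 = 0].
Proof.
move=> n12 n13 n23 T0 T1 T4 T5.
set e1 := d1 * (z1 - z3); set e2 := d2 * (z2 - z3).
have h1 : e1 + e2 = 0.
  rewrite -[RHS](_ : (d1 * z1 + d2 * z2 + d3 * z3) - z3 * (d1 + d2 + d3) = 0); last by rewrite T0 T1; ring.
  rewrite /e1 /e2; ring.
have h4 : e1 * (G4 z1 z3 - G4 z2 z3) = 0.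
  rewrite -[RHS](_ : (d1 * z1^+4 + d2 * z2^+4 + d3 * z3^+4) - z3^+4 * (d1 + d2 + d3) - G4 z2 z3 * (e1 + e2) = 0); last by rewrite T0 T4 h1; ring.
  rewrite /e1 /e2 /G4; ring.
have h5 : e1 * (G5 z1 z3 - G5 z2 z3) = 0.
  rewrite -[RHS](_ : (d1 * z1^+5 + d2 * z2^+5 + d3 * z3^+5) - z3^+5 * (d1 + d2 + d3) - G5 z2 z3 * (e1 + e2) = 0); last by rewrite T0 T5 h1; ring.
  rewrite /e1 /e2 /G5; ring.
have e10 : e1 = 0.
  apply/eqP/negP => /negP en.
  move: h4 h5 => /eqP; rewrite mulf_eq0 (negPf en) /= subr_eq0 => /eqP h4 /eqP.
  rewrite mulf_eq0 (negPf en) /= subr_eq0 => /eqP h5.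
  have W : z1 * (G4 z1 z3 - G4 z2 z3) + (G5 z1 z3 - G5 z2 z3) = 0 by rewrite h4 h5; ring.
  have : (z1 - z2) * (z2 - z3)^+3 = 0.
    rewrite -W; symmetry; apply: (@mod2 _ _ (0 - z2*z3^+3 + z2^+2*z3^+2 - 2%:R*z2^+3*z3 + z1*z3^+3 - 2%:R*z1*z2*z3^+2 + z1*z2^+2*z3 - z1*z2^+3 + z1^+2*z3^+2 + z1^+3*z3 + z1^+4)).
    rewrite /G4 /G5; ring.
  apply/eqP; rewrite mulf_eq0 expf_eq0 /= !subr_eq0 negb_or n12 n23 //.
have e20 : e2 = 0 by move: h1; rewrite e10 add0r.
have d10 : d1 = 0 by move: e10 => /eqP; rewrite /e1 mulf_eq0 subr_eq0 (negPf n13) orbF => /eqP.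
have d20 : d2 = 0 by move: e20 => /eqP; rewrite /e2 mulf_eq0 subr_eq0 (negPf n23) orbF => /eqP.
by split=> //; move: T0; rewrite d10 d20 !add0r.
Qed.

Definition Af (x1 x2 x3 x4 : F) := (x1 - x3) * (x2 - x4).
Definition Bf (x1 x2 x3 x4 : F) := (x1 - x4) * (x2 - x3).
Definition Qf (x1 x2 x3 x4 : F) :=
  (Af x1 x2 x3 x4)^+2 + Af x1 x2 x3 x4 * Bf x1 x2 x3 x4 + (Bf x1 x2 x3 x4)^+2.

Definition Sys (x1 x2 x3 x4 d1 d2 d3 d4 : F) : Prop :=
  [/\ d1 + d2 + d3 + d4 = 0, d1 * x1 + d2 * x2 + d3 * x3 + d4 * x4 = 0,
      d1 * x1^+4 + d2 * x2^+4 + d3 * x3^+4 + d4 * x4^+4 = 0 &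
      d1 * x1^+5 + d2 * x2^+5 + d3 * x3^+5 + d4 * x4^+5 = 0].

Lemma DQ (x1 x2 x3 x4 : F) :
  (G4 x1 x4 - G4 x3 x4) * (G5 x2 x4 - G5 x3 x4) - (G4 x2 x4 - G4 x3 x4) * (G5 x1 x4 - G5 x3 x4)
  = (x1 - x2) * (x1 - x3) * (x2 - x3) * Qf x1 x2 x3 x4.
Proof.
apply: (@mod2 _ _ (0 + 2%:R*x2*x3^+4*x4^+2 - 3%:R*x2^+2*x3^+3*x4^+2 - x2^+2*x3^+4*x4 + 2%:R*x2^+3*x3^+2*x4^+2 + 2%:R*x2^+3*x3^+3*x4 + x2^+3*x3^+4 - x2^+4*x3*x4^+2 - x2^+4*x3^+2*x4 - x2^+4*x3^+3 - 2%:R*x1*x3^+4*x4^+2 + 3%:R*x1*x2^+2*x3^+2*x4^+2 + 6%:R*x1*x2^+2*x3^+3*x4 - 2%:R*x1*x2^+3*x3*x4^+2 - 8%:R*x1*x2^+3*x3^+2*x4 - 2%:R*x1*x2^+3*x3^+3 + x1*x2^+4*x4^+2 + 2%:R*x1*x2^+4*x3*x4 + 2%:R*x1*x2^+4*x3^+2 + 3%:R*x1^+2*x3^+3*x4^+2 + x1^+2*x3^+4*x4 - 3%:R*x1^+2*x2*x3^+2*x4^+2 - 6%:R*x1^+2*x2*x3^+3*x4 + 6%:R*x1^+2*x2^+3*x3*x4 + 3%:R*x1^+2*x2^+3*x3^+2 - x1^+2*x2^+4*x4 - 3%:R*x1^+2*x2^+4*x3 - 2%:R*x1^+3*x3^+2*x4^+2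 - 2%:R*x1^+3*x3^+3*x4 - x1^+3*x3^+4 + 2%:R*x1^+3*x2*x3*x4^+2 + 8%:R*x1^+3*x2*x3^+2*x4 + 2%:R*x1^+3*x2*x3^+3 - 6%:R*x1^+3*x2^+2*x3*x4 - 3%:R*x1^+3*x2^+2*x3^+2 + 2%:R*x1^+3*x2^+4 + x1^+4*x3*x4^+2 + x1^+4*x3^+2*x4 + x1^+4*x3^+3 - x1^+4*x2*x4^+2 - 2%:R*x1^+4*x2*x3*x4 - 2%:R*x1^+4*x2*x3^+2 + x1^+4*x2^+2*x4 + 3%:R*x1^+4*x2^+2*x3 - 2%:R*x1^+4*x2^+3)).
rewrite /G4 /G5 /Qf /Af /Bf; ring.
Qed.

Lemma Sys_Q1 (x1 x2 x3 x4 d1 d2 d3 d4 : F) :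
  x1 != x2 -> x1 != x3 -> x1 != x4 -> x2 != x3 -> x2 != x4 -> x3 != x4 ->
  Sys x1 x2 x3 x4 d1 d2 d3 d4 -> ~ [/\ d1 = 0, d2 = 0, d3 = 0 & d4 = 0] ->
  Qf x1 x2 x3 x4 = 0.
Proof.
move=> n12 n13 n14 n23 n24 n34 [S0 S1 S4 S5] nz.
set e1 := d1 * (x1 - x4); set e2 := d2 * (x2 - x4); set e3 := d3 * (x3 - x4).
have hs : e1 + e2 + e3 = 0.
  rewrite -[RHS](_ : (d1 * x1 + d2 * x2 + d3 * x3 + d4 * x4) - x4 * (d1 + d2 + d3 + d4) = 0); last by rewrite S0 S1; ring.
  rewrite /e1 /e2 /e3; ring.
have h4 : e1 * (G4 x1 x4 - G4 x3 x4) + e2 * (G4 x2 x4 - G4 x3 x4) = 0.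
  rewrite -[RHS](_ : (d1 * x1^+4 + d2 * x2^+4 + d3 * x3^+4 + d4 * x4^+4) - x4^+4 * (d1 + d2 + d3 + d4) - G4 x3 x4 * (e1 + e2 + e3) = 0); last by rewrite S0 S4 hs; ring.
  rewrite /e1 /e2 /e3 /G4; ring.
have h5 : e1 * (G5 x1 x4 - G5 x3 x4) + e2 * (G5 x2 x4 - G5 x3 x4) = 0.
  rewrite -[RHS](_ : (d1 * x1^+5 + d2 * x2^+5 + d3 * x3^+5 + d4 * x4^+5) - x4^+5 * (d1 + d2 + d3 + d4) - G5 x3 x4 * (e1 + e2 + e3) = 0); last by rewrite S0 S5 hs; ring.
  rewrite /e1 /e2 /e3 /G5; ring.
have ne : e1 != 0 \/ e2 != 0.
  have [e10|] := eqVneq e1 0; last by left.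
  have [e20|] := eqVneq e2 0; last by right.
  exfalso; apply: nz.
  have e30 : e3 = 0 by move: hs; rewrite e10 e20 !add0r.
  have d10 : d1 = 0 by move: e10 => /eqP; rewrite /e1 mulf_eq0 subr_eq0 (negPf n14) orbF => /eqP.
  have d20 : d2 = 0 by move: e20 => /eqP; rewrite /e2 mulf_eq0 subr_eq0 (negPf n24) orbF => /eqP.
  have d30 : d3 = 0 by move: e30 => /eqP; rewrite /e3 mulf_eq0 subr_eq0 (negPf n34) orbF => /eqP.
  by split=> //; move: S0; rewrite d10 d20 d30 !add0r.
have := det2 h4 h5 ne; rewrite DQ => /eqP.
rewrite !mulf_eq0 !subr_eq0 (negPf n12) (negPf n13) (negPf n23) /=.
by move/eqP.
Qed.

Lemma Sys_Q2 (x1 x2 x3 x4 : F) :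
  x1 != x2 -> x1 != x3 -> x1 != x4 -> x2 != x3 -> x2 != x4 -> x3 != x4 ->
  Qf x1 x2 x3 x4 = 0 ->
  exists d1 d2 d3 d4, Sys x1 x2 x3 x4 d1 d2 d3 d4 /\ ~ [/\ d1 = 0, d2 = 0, d3 = 0 & d4 = 0].
Proof.
move=> n12 n13 n14 n23 n24 n34 hQ.
have hD := DQ x1 x2 x3 x4; rewrite hQ mulr0 in hD.
have [e1 [e2 [ne [h4 h5]]]] := ker2 hD.
set e3 := - (e1 + e2).
have y1 : x1 - x4 != 0 by rewrite subr_eq0.
have y2 : x2 - x4 != 0 by rewrite subr_eq0.
have y3 : x3 - x4 != 0 by rewrite subr_eq0.
set d1 := e1 / (x1 - x4); set d2 := e2 / (x2 - x4); set d3 := e3 / (x3 - x4).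
have E1 : d1 * (x1 - x4) = e1 by rewrite /d1 divfK.
have E2 : d2 * (x2 - x4) = e2 by rewrite /d2 divfK.
have E3 : d3 * (x3 - x4) = e3 by rewrite /d3 divfK.
exists d1, d2, d3, (- (d1 + d2 + d3)); split.
  split.
  - by ring.
  - have -> : d1 * x1 + d2 * x2 + d3 * x3 + - (d1 + d2 + d3) * x4 =
       d1 * (x1 - x4) + d2 * (x2 - x4) + d3 * (x3 - x4) by ring.
    by rewrite E1 E2 E3 /e3; ring.
  - have -> : d1 * x1^+4 + d2 * x2^+4 + d3 * x3^+4 + - (d1 + d2 + d3) * x4^+4 =
       d1 * (x1 - x4) * G4 x1 x4 + d2 * (x2 - x4) * G4 x2 x4 + d3 * (x3 - x4) * G4 x3 x4
       by rewrite /G4; ring.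
    rewrite E1 E2 E3 /e3 -[RHS]h4; ring.
  - have -> : d1 * x1^+5 + d2 * x2^+5 + d3 * x3^+5 + - (d1 + d2 + d3) * x4^+5 =
       d1 * (x1 - x4) * G5 x1 x4 + d2 * (x2 - x4) * G5 x2 x4 + d3 * (x3 - x4) * G5 x3 x4
       by rewrite /G5; ring.
    rewrite E1 E2 E3 /e3 -[RHS]h5; ring.
case=> d10 d20 _ _; case: ne => /eqP []; [rewrite -E1 d10 | rewrite -E2 d20]; ring.
Qed.

Lemma Sys_w4 (x1 x2 x3 x4 d1 d2 d3 d4 : F) :
  x1 != x2 -> x1 != x3 -> x2 != x3 ->
  Sys x1 x2 x3 x4 d1 d2 d3 d4 -> d4 = 0 -> [/\ d1 = 0, d2 = 0, d3 = 0 & d4 = 0].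
Proof.
move=> n12 n13 n23 [S0 S1 S4 S5] d40; subst d4.
move: S0 S1 S4 S5; rewrite !mul0r !addr0 => S0 S1 S4 S5.
by have [-> -> ->] := weight3 n12 n13 n23 S0 S1 S4 S5.
Qed.

Lemma Sys_cyc (x1 x2 x3 x4 d1 d2 d3 d4 : F) :
  Sys x1 x2 x3 x4 d1 d2 d3 d4 -> Sys x2 x3 x4 x1 d2 d3 d4 d1.
Proof.
case=> S0 S1 S4 S5; split.
- by rewrite -[RHS]S0; ring.
- by rewrite -[RHS]S1; ring.
- by rewrite -[RHS]S4; ring.
- by rewrite -[RHS]S5; ring.
Qed.

End Char2.

Lemma card_pow (F : finFieldType) (n : nat) (a : F) : (0 < n)%N ->
  (#|[set z : F | z ^+ n == a]| <= n)%N.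
Proof.
move=> n0.
have pn0 : ('X^n - a%:P : {poly F}) != 0.
  by rewrite -size_poly_eq0 size_XnsubC.
have := max_poly_roots pn0 _ (enum_uniq (mem [set z : F | z ^+ n == a])).
rewrite size_XnsubC // cardE ltnS; apply.
apply/allP => z; rewrite mem_enum inE => /eqP hz.
by rewrite rootE !hornerE hz subrr.
Qed.

Section FF.
Variables (F : finFieldType) (q r : nat).
Hypotheses (ch2 : (2%N \in [pchar F])) (qnat : [pchar F].-nat q) (hq4 : (4 <= q)%N)
  (hqr : q = (2 * r)%N) (cardF : #|F| = (q * q)%N).
Variable j : nat.
Hypothesis hqj : q = (3 * j + 1)%N.

Lemma frobD (a b : F) : (a + b) ^+ q = a ^+ q + b ^+ q.
Proof. exact: exprDn_pchar. Qed.
Lemma frobN (a : F) : (- a) ^+ q = - a ^+ q.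
Proof. exact: exprNn_pchar. Qed.
Lemma frobB (a b : F) : (a - b) ^+ q = a ^+ q - b ^+ q.
Proof. by rewrite frobD frobN. Qed.
Lemma Fq2 (x : F) : x ^+ (q * q) = x.
Proof. by rewrite -cardF expf_card. Qed.

Lemma sq_inj (a b : F) : a ^+ 2 = b ^+ 2 -> a = b.
Proof.
move=> h; apply/eqP; rewrite -subr_eq0.
have : (a - b) ^+ 2 == 0; last by rewrite expf_eq0.
apply/eqP; rewrite (@mod2 _ ch2 ((a - b)^+2) (a^+2 - b^+2) (b^+2 - a * b)); first by rewrite h subrr.
ring.
Qed.

Definition sqrtF (y : F) := y ^+ (2 * r * r).
Lemma sqrtFK (y : F) : sqrtF y ^+ 2 = y.
Proof. by rewrite /sqrtF -exprM -[RHS]Fq2 hqr; congr (_ ^+ _); lia. Qed.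

Lemma exists_nonfix : exists z : F, z ^+ q != z.
Proof.
have [z hz|H] := pickP (fun z : F => z ^+ q != z); first by exists z.
exfalso.
have : (#|[set z : F | z ^+ q.-1 == 1%R]| <= q.-1)%N by apply: card_pow; lia.
have : (#|[set z : F | z != 0%R]| <= #|[set z : F | z ^+ q.-1 == 1%R]|)%N.
  apply: subset_leq_card; apply/subsetP => z; rewrite !inE => z0.
  have := H z; move/negbFE => /eqP hz.
  have : z ^+ q.-1 * z = 1 * z by rewrite -exprSr prednK ?hz ?mul1r //; lia.
  by move/(mulIf z0) => ->.
have -> : #|[set z : F | z != 0%R]| = (#|F|).-1.
  rewrite -[#|F|](cardsC [set z : F | z != 0%R]).
  have -> : ~: [set z : F | z != 0%R] = [set 0] by apply/setP => z; rewrite !inE negbK.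
  by rewrite cards1 addn1.
rewrite cardF; nia.
Qed.


Lemma cardNZ : #|[set z : F | z != 0%R]| = (q * q).-1.
Proof.
rewrite -cardF -[#|F|](cardsC [set z : F | z != 0%R]).
have -> : ~: [set z : F | z != 0%R] = [set 0] by apply/setP => z; rewrite !inE negbK.
by rewrite cards1 addn1.
Qed.

Lemma unitpow (z : F) : z != 0 -> z ^+ (q * q).-1 = 1.
Proof.
move=> z0; apply: (mulIf z0); rewrite mul1r -exprSr prednK ?Fq2 //; nia.
Qed.

Lemma cardU : #|Uroots F q| = q.+1.
Proof.
have le1 : (#|Uroots F q| <= q.+1)%N by apply: card_pow.
have : (#|[set z : F | z != 0%R]| <= #|Uroots F q| * (q - 1))%N.
  rewrite -sum1dep_card (partition_big (fun z : F => z ^+ (q - 1)) (mem (Uroots F q))) /=; last first.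
    move=> z z0; rewrite inE -exprM.
    have -> : ((q - 1) * q.+1 = (q * q).-1)%N by nia.
    by rewrite unitpow.
  rewrite -sum_nat_const; apply: leq_sum => t _.
  rewrite sum1dep_card; apply: leq_trans (card_pow t _); last by lia.
  by apply: subset_leq_card; apply/subsetP => z; rewrite !inE => /andP [].
rewrite cardNZ => h; apply/eqP; rewrite eqn_leq le1 /=.
case: (leqP q.+1 #|Uroots F q|) => // hlt.
have := leq_mul (hlt : (#|Uroots F q| <= q)%N) (leqnn (q - 1)); nia.
Qed.

Lemma exists_omega :
  exists w : F, w ^+ 2 + w + 1 = 0 /\ w ^+ q = w.
Proof.
have hj := hqj; set k := (j * (3 * j + 2))%N.
have hk : (3 * k = (q * q).-1)%N by rewrite /k hj; nia.
have [z /andP [z0 zk]|H] := pickP (fun z : F => (z != 0) && (z ^+ k != 1)); last first.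
  exfalso.
  have : (#|[set z : F | z ^+ k == 1%R]| <= k)%N by apply: card_pow; rewrite /k; nia.
  have : (#|[set z : F | z != 0%R]| <= #|[set z : F | z ^+ k == 1%R]|)%N.
    apply: subset_leq_card; apply/subsetP => z; rewrite !inE => z0.
    by have := H z; rewrite z0 /= => /negbFE.
  rewrite cardNZ; nia.
set w := z ^+ k.
have w3 : w ^+ 3 = 1 by rewrite /w -exprM mulnC hk unitpow.
exists w; split.
  have : (w - 1) * (w ^+ 2 + w + 1) = 0.
    have -> : (w - 1) * (w ^+ 2 + w + 1) = w ^+ 3 - 1 by ring.
    by rewrite w3 subrr.
  by move/eqP; rewrite mulf_eq0 subr_eq0 (negPf zk) /= => /eqP.
by rewrite hj exprD exprM w3 expr1n mul1r expr1.
Qed.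




Lemma U_neq0 (x : F) : x ^+ q.+1 = 1 -> x != 0.
Proof. by move=> h; apply/eqP => x0; move: h; rewrite x0 expr0n /= => /eqP; rewrite eq_sym oner_eq0. Qed.

Lemma xinv (x : F) : x ^+ q.+1 = 1 -> x ^+ q = x^-1.
Proof.
move=> h; have x0 := U_neq0 h.
by apply: (mulfI x0); rewrite -exprS h divff.
Qed.

Section Roots.
Variables (x1 x2 x3 : F).
Hypotheses (hx1 : x1 ^+ q.+1 = 1) (hx2 : x2 ^+ q.+1 = 1) (hx3 : x3 ^+ q.+1 = 1)
  (n12 : x1 != x2) (n13 : x1 != x3) (n23 : x2 != x3).

Definition den (w : F) := w * (x2 - x3) - (x1 - x3).
Definition num (w : F) := w * x1 * (x2 - x3) - x2 * (x1 - x3).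
Definition Yr (w : F) := num w / den w.

Lemma Qf_fac (w X : F) : w ^+ 2 + w + 1 = 0 ->
  Qf x1 x2 x3 X = (X * den w - num w) * (X * den (- (1 + w)) - num (- (1 + w))).
Proof.
move=> hw; apply/eqP; rewrite -subr_eq0; apply/eqP.
have -> : Qf x1 x2 x3 X - (X * den w - num w) * (X * den (- (1 + w)) - num (- (1 + w)))
  = (w ^+ 2 + w + 1) * (Bf x1 x2 x3 X) ^+ 2 by rewrite /Qf /Af /Bf /den /num; ring.
by rewrite hw mul0r.
Qed.

Lemma w_neq0 (w : F) : w ^+ 2 + w + 1 = 0 -> w != 0.
Proof. by move=> hw; apply/eqP => w0; move: hw; rewrite w0 expr0n /= !add0r => /eqP; rewrite oner_eq0. Qed.

Lemma x_neq0 : [/\ x1 != 0, x2 != 0 & x3 != 0].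
Proof. by split; apply: U_neq0. Qed.

Lemma frob_den (w : F) : w ^+ q = w -> den w ^+ q = - num w / (x1 * x2 * x3).
Proof.
move=> hwq; case: x_neq0 => a1 a2 a3.
rewrite /den frobB exprMn !frobB hwq (xinv hx1) (xinv hx2) (xinv hx3) /num.
by field; rewrite ?a1 ?a2 ?a3.
Qed.

Lemma frob_num (w : F) : w ^+ q = w -> num w ^+ q = - den w / (x1 * x2 * x3).
Proof.
move=> hwq; case: x_neq0 => a1 a2 a3.
rewrite /num frobB !exprMn !frobB hwq (xinv hx1) (xinv hx2) (xinv hx3) /den.
by field; rewrite ?a1 ?a2 ?a3.
Qed.

Lemma den_neq0 (w : F) : w ^+ 2 + w + 1 = 0 -> w ^+ q = w -> den w != 0.
Proof.
move=> hw hwq; apply/eqP => h.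
have := frob_den hwq; rewrite h expr0n /=.
have -> : (q == 0)%N = false by apply/eqP; lia.
move=> /esym /eqP; rewrite mulf_eq0 oppr_eq0 invr_eq0 !mulf_eq0.
case: x_neq0 => a1 a2 a3; rewrite (negPf a1) (negPf a2) (negPf a3) !orbF => /eqP hn.
have : w * (x3 - x2) * (x1 - x2) = 0.
  have -> : w * (x3 - x2) * (x1 - x2) = - num w + x2 * den w by rewrite /num /den; ring.
  by rewrite hn h; ring.
apply/eqP; rewrite !mulf_eq0 !subr_eq0 (negPf (w_neq0 hw)) (negPf n12) eq_sym (negPf n23) //.
Qed.

Lemma num_neq0 (w : F) : w ^+ 2 + w + 1 = 0 -> w ^+ q = w -> num w != 0.
Proof.
move=> hw hwq; apply/eqP => h.
have := frob_num hwq; rewrite h expr0n /=.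
have -> : (q == 0)%N = false by apply/eqP; lia.
move=> /esym /eqP; rewrite mulf_eq0 oppr_eq0 invr_eq0 !mulf_eq0.
case: x_neq0 => a1 a2 a3; rewrite (negPf a1) (negPf a2) (negPf a3) !orbF.
by rewrite (negPf (den_neq0 hw hwq)).
Qed.

Lemma Yr_U (w : F) : w ^+ 2 + w + 1 = 0 -> w ^+ q = w -> Yr w ^+ q.+1 = 1.
Proof.
move=> hw hwq; have dn := den_neq0 hw hwq; have nn := num_neq0 hw hwq.
case: x_neq0 => a1 a2 a3.
rewrite exprS /Yr expr_div_n frob_num // frob_den //.
by field; rewrite ?a1 ?a2 ?a3 ?dn ?oppr_eq0 ?nn.
Qed.

Lemma Yr_root (w : F) : w ^+ 2 + w + 1 = 0 -> w ^+ q = w -> Qf x1 x2 x3 (Yr w) = 0.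
Proof.
move=> hw hwq; rewrite (Qf_fac _ hw).
have -> : Yr w * den w - num w = 0 by rewrite /Yr divfK ?subrr // den_neq0.
by rewrite mul0r.
Qed.

Lemma Qf_roots (w X : F) : w ^+ 2 + w + 1 = 0 -> w ^+ q = w ->
  Qf x1 x2 x3 X = 0 -> X = Yr w \/ X = Yr (- (1 + w)).
Proof.
move=> hw hwq; rewrite (Qf_fac _ hw) => /eqP; rewrite mulf_eq0 => /orP [] /eqP h.
  by left; rewrite /Yr; apply: (mulIf (den_neq0 hw hwq)); rewrite divfK ?den_neq0 //; apply/eqP; rewrite -subr_eq0 h.
have hw' : (- (1 + w)) ^+ 2 + (- (1 + w)) + 1 = 0 by rewrite -hw; ring.
have hwq' : (- (1 + w)) ^+ q = - (1 + w) by rewrite frobN frobD expr1n hwq.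
by right; rewrite /Yr; apply: (mulIf (den_neq0 hw' hwq')); rewrite divfK ?den_neq0 //; apply/eqP; rewrite -subr_eq0 h.
Qed.

Lemma Qf_ne (X : F) : Qf x1 x2 x3 X = 0 -> [/\ X != x1, X != x2 & X != x3].
Proof.
move=> h; split; apply/eqP => e; move: h; rewrite e.
- have -> : Qf x1 x2 x3 x1 = ((x1 - x3) * (x2 - x1)) ^+ 2 by rewrite /Qf /Af /Bf; ring.
  move/eqP; rewrite expf_eq0 /= !mulf_eq0 !subr_eq0 (negPf n13) eq_sym (negPf n12) //.
- have -> : Qf x1 x2 x3 x2 = ((x1 - x2) * (x2 - x3)) ^+ 2 by rewrite /Qf /Af /Bf; ring.
  move/eqP; rewrite expf_eq0 /= !mulf_eq0 !subr_eq0 (negPf n12) (negPf n23) //.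
- have -> : Qf x1 x2 x3 x3 = ((x1 - x3) * (x2 - x3)) ^+ 2.
    apply: (@mod2 _ ch2 _ _ (((x1 - x3) * (x2 - x3)) ^+ 2)); rewrite /Qf /Af /Bf; ring.
  move/eqP; rewrite expf_eq0 /= !mulf_eq0 !subr_eq0 (negPf n13) (negPf n23) //.
Qed.

Lemma Yr_diff (w : F) : w ^+ 2 + w + 1 = 0 -> w ^+ q = w -> Yr w != Yr (- (1 + w)).
Proof.
move=> hw hwq; apply/eqP => e.
have hw' : (- (1 + w)) ^+ 2 + (- (1 + w)) + 1 = 0 by rewrite -hw; ring.
have hwq' : (- (1 + w)) ^+ q = - (1 + w) by rewrite frobN frobD expr1n hwq.
set X := Yr w.
have h1 : X * den w - num w = 0 by rewrite /X /Yr divfK ?subrr // den_neq0.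
have h2 : X * den (- (1 + w)) - num (- (1 + w)) = 0 by rewrite /X e /Yr divfK ?subrr // den_neq0.
have hB : Bf x1 x2 x3 X = 0.
  have -> : Bf x1 x2 x3 X = (X * den (- (1 + w)) - num (- (1 + w))) - (X * den w - num w) + (- (w * Bf x1 x2 x3 X)) * 2%:R.
    by rewrite /den /num /Bf; ring.
  by rewrite h1 h2 (two0 ch2); ring.
have := Yr_root hw hwq; rewrite -/X => /Qf_ne [nx1 _ _].
by move/eqP: hB; rewrite /Bf mulf_eq0 !subr_eq0 (negPf n23) eq_sym (negPf nx1).
Qed.

End Roots.


Definition Pc (u1 u2 u3 u4 c1 c2 c3 c4 : F) : Prop :=
  [/\ c1 * u1 ^+ 3 + c2 * u2 ^+ 3 + c3 * u3 ^+ 3 + c4 * u4 ^+ 3 = 0,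
      c1 * u1 ^+ (q - 2) + c2 * u2 ^+ (q - 2) + c3 * u3 ^+ (q - 2) + c4 * u4 ^+ (q - 2) = 0,
      c1 * u1 ^+ 5 + c2 * u2 ^+ 5 + c3 * u3 ^+ 5 + c4 * u4 ^+ 5 = 0 &
      c1 * u1 ^+ (q - 4) + c2 * u2 ^+ (q - 4) + c3 * u3 ^+ (q - 4) + c4 * u4 ^+ (q - 4) = 0].

Lemma tw (u c : F) : u ^+ q.+1 = 1 ->
  [/\ c * u ^+ (q - 4) * u ^+ 2 = c * u ^+ (q - 2),
      c * u ^+ (q - 4) * (u ^+ 2) ^+ 4 = c * u ^+ 3 &
      c * u ^+ (q - 4) * (u ^+ 2) ^+ 5 = c * u ^+ 5].
Proof.
move=> hu; split; rewrite -mulrA -?exprM -exprD.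
- by congr (_ * _ ^+ _); lia.
- by rewrite (_ : (q - 4 + 2 * 4 = q.+1 + 3)%N); [rewrite exprD hu mul1r | lia].
- by rewrite (_ : (q - 4 + 2 * 5 = q.+1 + 5)%N); [rewrite exprD hu mul1r | lia].
Qed.

Lemma Pc_Sys (u1 u2 u3 u4 c1 c2 c3 c4 : F) :
  u1 ^+ q.+1 = 1 -> u2 ^+ q.+1 = 1 -> u3 ^+ q.+1 = 1 -> u4 ^+ q.+1 = 1 ->
  Pc u1 u2 u3 u4 c1 c2 c3 c4 <->
  Sys (u1 ^+ 2) (u2 ^+ 2) (u3 ^+ 2) (u4 ^+ 2)
      (c1 * u1 ^+ (q - 4)) (c2 * u2 ^+ (q - 4)) (c3 * u3 ^+ (q - 4)) (c4 * u4 ^+ (q - 4)).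
Proof.
move=> h1 h2 h3 h4.
case: (tw c1 h1) => a1 b1 e1; case: (tw c2 h2) => a2 b2 e2.
case: (tw c3 h3) => a3 b3 e3; case: (tw c4 h4) => a4 b4 e4.
rewrite /Sys a1 a2 a3 a4 b1 b2 b3 b4 e1 e2 e3 e4.
by split; case.
Qed.

Lemma powq (u : F) (a b : nat) : u ^+ q.+1 = 1 -> (a + b = q.+1)%N -> (u ^+ a) ^+ q = u ^+ b.
Proof.
move=> hu hab; have u0 : u ^+ a != 0 by rewrite expf_neq0 // (U_neq0 hu).
apply: (mulIf u0).
by rewrite exprAC -exprMn -exprSr hu expr1n -exprD addnC hab hu.
Qed.

Lemma pw4 (u : F) : u ^+ q.+1 = 1 ->
  [/\ (u ^+ 3) ^+ q = u ^+ (q - 2), (u ^+ (q - 2)) ^+ q = u ^+ 3,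
      (u ^+ 5) ^+ q = u ^+ (q - 4) & (u ^+ (q - 4)) ^+ q = u ^+ 5].
Proof. by move=> hu; split; apply: powq => //; lia. Qed.

Lemma Pc_frob (u1 u2 u3 u4 c1 c2 c3 c4 : F) :
  u1 ^+ q.+1 = 1 -> u2 ^+ q.+1 = 1 -> u3 ^+ q.+1 = 1 -> u4 ^+ q.+1 = 1 ->
  Pc u1 u2 u3 u4 c1 c2 c3 c4 -> Pc u1 u2 u3 u4 (c1 ^+ q) (c2 ^+ q) (c3 ^+ q) (c4 ^+ q).
Proof.
move=> h1 h2 h3 h4 [E3 Eq2 E5 Eq4].
case: (pw4 h1) => a1 b1 c1' d1; case: (pw4 h2) => a2 b2 c2' d2.
case: (pw4 h3) => a3 b3 c3' d3; case: (pw4 h4) => a4 b4 c4' d4.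
have fr0 : forall s : F, s = 0 -> s ^+ q = 0.
  by move=> s ->; rewrite expr0n; case: q hq4.
split.
- by move: (fr0 _ Eq2); rewrite !frobD (exprMn _ c1) (exprMn _ c2) (exprMn _ c3) (exprMn _ c4) b1 b2 b3 b4.
- by move: (fr0 _ E3); rewrite !frobD (exprMn _ c1) (exprMn _ c2) (exprMn _ c3) (exprMn _ c4) a1 a2 a3 a4.
- by move: (fr0 _ Eq4); rewrite !frobD (exprMn _ c1) (exprMn _ c2) (exprMn _ c3) (exprMn _ c4) d1 d2 d3 d4.
- by move: (fr0 _ E5); rewrite !frobD (exprMn _ c1) (exprMn _ c2) (exprMn _ c3) (exprMn _ c4) c1' c2' c3' c4'.
Qed.

Lemma Pc_scale (k u1 u2 u3 u4 c1 c2 c3 c4 : F) :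
  Pc u1 u2 u3 u4 c1 c2 c3 c4 -> Pc u1 u2 u3 u4 (k * c1) (k * c2) (k * c3) (k * c4).
Proof.
case=> E1 E2 E3 E4; split.
- by rewrite -[RHS](mulr0 k) -E1; ring.
- by rewrite -[RHS](mulr0 k) -E2; ring.
- by rewrite -[RHS](mulr0 k) -E3; ring.
- by rewrite -[RHS](mulr0 k) -E4; ring.
Qed.

Lemma Pc_add (u1 u2 u3 u4 c1 c2 c3 c4 c1' c2' c3' c4' : F) :
  Pc u1 u2 u3 u4 c1 c2 c3 c4 -> Pc u1 u2 u3 u4 c1' c2' c3' c4' ->
  Pc u1 u2 u3 u4 (c1 + c1') (c2 + c2') (c3 + c3') (c4 + c4').
Proof.
case=> E1 E2 E3 E4 [E1' E2' E3' E4']; split.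
- by rewrite -[RHS](addr0 0) -{1}E1 -E1'; ring.
- by rewrite -[RHS](addr0 0) -{1}E2 -E2'; ring.
- by rewrite -[RHS](addr0 0) -{1}E3 -E3'; ring.
- by rewrite -[RHS](addr0 0) -{1}E4 -E4'; ring.
Qed.

Lemma sq_neq (a b : F) : a != b -> a ^+ 2 != b ^+ 2.
Proof. by move=> ab; apply/eqP => /sq_inj /eqP; rewrite (negPf ab). Qed.

Lemma dz (u c : F) : u ^+ q.+1 = 1 -> c * u ^+ (q - 4) = 0 -> c = 0.
Proof. by move=> hu /eqP; rewrite mulf_eq0 expf_eq0 (negPf (U_neq0 hu)) andbF orbF => /eqP. Qed.

Lemma Pc_zero (u1 u2 u3 u4 c1 c2 c3 c4 : F) :
  u1 ^+ q.+1 = 1 -> u2 ^+ q.+1 = 1 -> u3 ^+ q.+1 = 1 -> u4 ^+ q.+1 = 1 ->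
  u1 != u2 -> u1 != u3 -> u1 != u4 -> u2 != u3 -> u2 != u4 -> u3 != u4 ->
  Pc u1 u2 u3 u4 c1 c2 c3 c4 -> [\/ c1 = 0, c2 = 0, c3 = 0 | c4 = 0] ->
  [/\ c1 = 0, c2 = 0, c3 = 0 & c4 = 0].
Proof.
move=> h1 h2 h3 h4 n12 n13 n14 n23 n24 n34 /(Pc_Sys _ _ _ _ h1 h2 h3 h4) S hz.
have m12 := sq_neq n12; have m13 := sq_neq n13; have m14 := sq_neq n14.
have m23 := sq_neq n23; have m24 := sq_neq n24; have m34 := sq_neq n34.
have m31 : u3 ^+ 2 != u1 ^+ 2 by rewrite eq_sym.
have m41 : u4 ^+ 2 != u1 ^+ 2 by rewrite eq_sym.
have m42 : u4 ^+ 2 != u2 ^+ 2 by rewrite eq_sym.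
suff : [/\ c1 * u1 ^+ (q - 4) = 0, c2 * u2 ^+ (q - 4) = 0, c3 * u3 ^+ (q - 4) = 0
          & c4 * u4 ^+ (q - 4) = 0].
  by case=> /(dz h1) -> /(dz h2) -> /(dz h3) -> /(dz h4) ->.
case: hz => hz.
- have S' := Sys_cyc ch2 S.
  have [] := Sys_w4 ch2 m23 m24 m34 S'; first by rewrite hz mul0r.
  by move=> -> -> ->; rewrite hz mul0r.
- have S' := Sys_cyc ch2 (Sys_cyc ch2 S).
  have [] := Sys_w4 ch2 m34 m31 m41 S'; first by rewrite hz mul0r.
  by move=> -> -> ->; rewrite hz mul0r.
- have S' := Sys_cyc ch2 (Sys_cyc ch2 (Sys_cyc ch2 S)).
  have [] := Sys_w4 ch2 m41 m42 m12 S'; first by rewrite hz mul0r.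
  by move=> -> -> ->; rewrite hz mul0r.
- have [] := Sys_w4 ch2 m12 m13 m23 S; first by rewrite hz mul0r.
  by move=> -> -> ->; rewrite hz mul0r.
Qed.



Lemma Pc_Q1 (u1 u2 u3 u4 c1 c2 c3 c4 : F) :
  u1 ^+ q.+1 = 1 -> u2 ^+ q.+1 = 1 -> u3 ^+ q.+1 = 1 -> u4 ^+ q.+1 = 1 ->
  u1 != u2 -> u1 != u3 -> u1 != u4 -> u2 != u3 -> u2 != u4 -> u3 != u4 ->
  Pc u1 u2 u3 u4 c1 c2 c3 c4 -> ~ [/\ c1 = 0, c2 = 0, c3 = 0 & c4 = 0] ->
  Qf (u1 ^+ 2) (u2 ^+ 2) (u3 ^+ 2) (u4 ^+ 2) = 0.
Proof.
move=> h1 h2 h3 h4 n12 n13 n14 n23 n24 n34 P nz.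
have S := (Pc_Sys _ _ _ _ h1 h2 h3 h4).1 P.
apply: (Sys_Q1 ch2 (sq_neq n12) (sq_neq n13) (sq_neq n14) (sq_neq n23) (sq_neq n24) (sq_neq n34) S).
by case=> /(dz h1) e1 /(dz h2) e2 /(dz h3) e3 /(dz h4) e4; apply: nz.
Qed.

Lemma negz (z : F) : z + z ^+ q = 0 -> z ^+ q = z.
Proof.
move=> h; move/eqP: h; rewrite addrC addr_eq0 => /eqP ->.
exact: oppr_pchar2 ch2 z.
Qed.

Lemma kappa (a : F) : a != 0 -> exists k, k * a + (k * a) ^+ q != 0.
Proof.
move=> a0; have [z hz] := exists_nonfix.
exists (z / a); rewrite divfK //.
by apply/eqP => /negz /eqP; rewrite (negPf hz).
Qed.

Lemma wfix (x : F) : (x + x ^+ q) ^+ q = x + x ^+ q.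
Proof. by rewrite frobD -exprM Fq2 addrC. Qed.

Lemma Pc_Q2 (u1 u2 u3 u4 : F) :
  u1 ^+ q.+1 = 1 -> u2 ^+ q.+1 = 1 -> u3 ^+ q.+1 = 1 -> u4 ^+ q.+1 = 1 ->
  u1 != u2 -> u1 != u3 -> u1 != u4 -> u2 != u3 -> u2 != u4 -> u3 != u4 ->
  Qf (u1 ^+ 2) (u2 ^+ 2) (u3 ^+ 2) (u4 ^+ 2) = 0 ->
  exists c1 c2 c3 c4, [/\ Pc u1 u2 u3 u4 c1 c2 c3 c4,
    [/\ c1 != 0, c2 != 0, c3 != 0 & c4 != 0] &
    [/\ c1 ^+ q = c1, c2 ^+ q = c2, c3 ^+ q = c3 & c4 ^+ q = c4]].
Proof.
move=> h1 h2 h3 h4 n12 n13 n14 n23 n24 n34 hQ.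
have [d1 [d2 [d3 [d4 [S nz]]]]] := Sys_Q2 ch2 (sq_neq n12) (sq_neq n13) (sq_neq n14) (sq_neq n23) (sq_neq n24) (sq_neq n34) hQ.
have ed : forall (u d : F), u ^+ q.+1 = 1 -> d * u ^+ 5 * u ^+ (q - 4) = d.
  move=> u d hu; rewrite -mulrA -exprD (_ : (5 + (q - 4) = q.+1)%N); last by lia.
  by rewrite hu mulr1.
set c1 := d1 * u1 ^+ 5; set c2 := d2 * u2 ^+ 5; set c3 := d3 * u3 ^+ 5; set c4 := d4 * u4 ^+ 5.
have P : Pc u1 u2 u3 u4 c1 c2 c3 c4.
  by apply/(Pc_Sys _ _ _ _ h1 h2 h3 h4); rewrite /c1 /c2 /c3 /c4 !ed.
have nzc : ~ [/\ c1 = 0, c2 = 0, c3 = 0 & c4 = 0].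
  case=> e1 e2 e3 e4; apply: nz.
  by rewrite -(ed u1 d1 h1) -(ed u2 d2 h2) -(ed u3 d3 h3) -(ed u4 d4 h4) -/c1 -/c2 -/c3 -/c4 e1 e2 e3 e4 !mul0r.
have [k hk] : exists k, ~ [/\ k * c1 + (k * c1) ^+ q = 0, k * c2 + (k * c2) ^+ q = 0,
                            k * c3 + (k * c3) ^+ q = 0 & k * c4 + (k * c4) ^+ q = 0].
  have [e1|n1] := eqVneq c1 0; last by have [k /eqP hk] := kappa n1; exists k; case.
  have [e2|n2] := eqVneq c2 0; last by have [k /eqP hk] := kappa n2; exists k; case.
  have [e3|n3] := eqVneq c3 0; last by have [k /eqP hk] := kappa n3; exists k; case.
  have [e4|n4] := eqVneq c4 0; last by have [k /eqP hk] := kappa n4; exists k; case.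
  by exfalso; apply: nzc.
have Pk := Pc_scale k P.
have Pw := Pc_add Pk (Pc_frob h1 h2 h3 h4 Pk).
exists (k * c1 + (k * c1) ^+ q), (k * c2 + (k * c2) ^+ q), (k * c3 + (k * c3) ^+ q), (k * c4 + (k * c4) ^+ q).
split => //; last by split; apply: wfix.
have Z := Pc_zero h1 h2 h3 h4 n12 n13 n14 n23 n24 n34 Pw.
by split; apply/eqP => e; apply: hk; apply: Z; first [exact: Or41 e | exact: Or42 e | exact: Or43 e | exact: Or44 e].
Qed.

Definition blk (u1 u2 u3 u4 : F) : {set F} := u1 |: (u2 |: (u3 |: [set u4])).

Lemma card_blk (u1 u2 u3 u4 : F) :
  u1 != u2 -> u1 != u3 -> u1 != u4 -> u2 != u3 -> u2 != u4 -> u3 != u4 ->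
  #|blk u1 u2 u3 u4| = 4%N.
Proof.
move=> n12 n13 n14 n23 n24 n34.
by rewrite /blk !cardsU1 cards1 !inE (negPf n12) (negPf n13) (negPf n14) (negPf n23) (negPf n24) (negPf n34).
Qed.

Lemma sum4 (u1 u2 u3 u4 : F) (c g : F -> F) :
  u1 ^+ q.+1 = 1 -> u2 ^+ q.+1 = 1 -> u3 ^+ q.+1 = 1 -> u4 ^+ q.+1 = 1 ->
  u1 != u2 -> u1 != u3 -> u1 != u4 -> u2 != u3 -> u2 != u4 -> u3 != u4 ->
  (forall u, u \notin blk u1 u2 u3 u4 -> c u = 0) ->
  \sum_(u in Uroots F q) c u * g u = c u1 * g u1 + c u2 * g u2 + c u3 * g u3 + c u4 * g u4.
Proof.
move=> h1 h2 h3 h4 n12 n13 n14 n23 n24 n34 hc.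
rewrite (big_setID (blk u1 u2 u3 u4)) /=.
rewrite [X in _ + X]big1 ?addr0; last first.
  by move=> u; rewrite inE => /andP [/hc -> _]; rewrite mul0r.
have -> : Uroots F q :&: blk u1 u2 u3 u4 = blk u1 u2 u3 u4.
  apply/setIidPr/subsetP => u; rewrite /blk !inE => /or4P [] /eqP ->; apply/eqP.
  - exact: h1.
  - exact: h2.
  - exact: h3.
  - exact: h4.
rewrite /blk big_setU1 /=; last by rewrite !inE (negPf n12) (negPf n13) (negPf n14).
rewrite big_setU1 /=; last by rewrite !inE (negPf n23) (negPf n24).
rewrite big_setU1 /=; last by rewrite !inE (negPf n34).
by rewrite big_set1 !addrA.
Qed.

Lemma dual_iff (u1 u2 u3 u4 : F) (c : {ffun F -> F}) :
  u1 ^+ q.+1 = 1 -> u2 ^+ q.+1 = 1 -> u3 ^+ q.+1 = 1 -> u4 ^+ q.+1 = 1 ->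
  u1 != u2 -> u1 != u3 -> u1 != u4 -> u2 != u3 -> u2 != u4 -> u3 != u4 ->
  (forall u, u \notin blk u1 u2 u3 u4 -> c u = 0) ->
  [forall a3 : F, forall aq2 : F, forall a5 : F, forall aq4 : F,
     \sum_(u in Uroots F q) c u * C35_coord q a3 aq2 a5 aq4 u == 0]
  <-> Pc u1 u2 u3 u4 (c u1) (c u2) (c u3) (c u4).
Proof.
move=> h1 h2 h3 h4 n12 n13 n14 n23 n24 n34 hc.
have E : forall a3 aq2 a5 aq4,
  \sum_(u in Uroots F q) c u * C35_coord q a3 aq2 a5 aq4 u =
  a3 * (c u1 * u1 ^+ 3 + c u2 * u2 ^+ 3 + c u3 * u3 ^+ 3 + c u4 * u4 ^+ 3) +
  aq2 * (c u1 * u1 ^+ (q - 2) + c u2 * u2 ^+ (q - 2) + c u3 * u3 ^+ (q - 2) + c u4 * u4 ^+ (q - 2)) +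
  a5 * (c u1 * u1 ^+ 5 + c u2 * u2 ^+ 5 + c u3 * u3 ^+ 5 + c u4 * u4 ^+ 5) +
  aq4 * (c u1 * u1 ^+ (q - 4) + c u2 * u2 ^+ (q - 4) + c u3 * u3 ^+ (q - 4) + c u4 * u4 ^+ (q - 4)).
  move=> a3 aq2 a5 aq4.
  rewrite (@sum4 u1 u2 u3 u4 c (C35_coord q a3 aq2 a5 aq4) h1 h2 h3 h4 n12 n13 n14 n23 n24 n34 hc).
  rewrite /C35_coord; ring.
split.
- move=> H; split.
  + by move: H => /forallP/(_ 1)/forallP/(_ 0)/forallP/(_ 0)/forallP/(_ 0)/eqP; rewrite E !mul1r !mul0r ?add0r ?addr0.
  + by move: H => /forallP/(_ 0)/forallP/(_ 1)/forallP/(_ 0)/forallP/(_ 0)/eqP; rewrite E !mul1r !mul0r ?add0r ?addr0.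
  + by move: H => /forallP/(_ 0)/forallP/(_ 0)/forallP/(_ 1)/forallP/(_ 0)/eqP; rewrite E !mul1r !mul0r ?add0r ?addr0.
  + by move: H => /forallP/(_ 0)/forallP/(_ 0)/forallP/(_ 0)/forallP/(_ 1)/eqP; rewrite E !mul1r !mul0r ?add0r ?addr0.
- case=> P1 P2 P3 P4.
  apply/forallP => a3; apply/forallP => aq2; apply/forallP => a5; apply/forallP => aq4.
  by rewrite E P1 P2 P3 P4 !mulr0 !addr0.
Qed.

Lemma blkB4 (u1 u2 u3 u4 : F) :
  u1 ^+ q.+1 = 1 -> u2 ^+ q.+1 = 1 -> u3 ^+ q.+1 = 1 -> u4 ^+ q.+1 = 1 ->
  u1 != u2 -> u1 != u3 -> u1 != u4 -> u2 != u3 -> u2 != u4 -> u3 != u4 ->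
  (blk u1 u2 u3 u4 \in B4_C35_dual_GFq F q) <-> Qf (u1 ^+ 2) (u2 ^+ 2) (u3 ^+ 2) (u4 ^+ 2) = 0.
Proof.
move=> h1 h2 h3 h4 n12 n13 n14 n23 n24 n34.
have inb : [/\ u1 \in blk u1 u2 u3 u4, u2 \in blk u1 u2 u3 u4, u3 \in blk u1 u2 u3 u4
              & u4 \in blk u1 u2 u3 u4] by split; rewrite /blk !inE eqxx ?orbT.
case: inb => i1 i2 i3 i4.
split.
- rewrite inE => /existsP [c /and3P [/andP [/andP [hsup hfa] _] /eqP hb _]].
  have hc : forall u, u \notin blk u1 u2 u3 u4 -> c u = 0.
    by move=> u; rewrite hb inE negbK => /eqP.
  have P := (dual_iff h1 h2 h3 h4 n12 n13 n14 n23 n24 n34 hc).1 hfa.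
  apply: (Pc_Q1 h1 h2 h3 h4 n12 n13 n14 n23 n24 n34 P).
  case=> e1 _ _ _; move: i1; rewrite hb inE e1; by rewrite eqxx.
- move=> hQ.
  have [c1 [c2 [c3 [c4 [P [z1 z2 z3 z4] [f1 f2 f3 f4]]]]]] := Pc_Q2 h1 h2 h3 h4 n12 n13 n14 n23 n24 n34 hQ.
  pose c := [ffun u => if u == u1 then c1 else if u == u2 then c2 else if u == u3 then c3
                       else if u == u4 then c4 else 0].
  have cu : [/\ c u1 = c1, c u2 = c2, c u3 = c3 & c u4 = c4].
    rewrite !ffunE eqxx eq_sym (negPf n12) eqxx eq_sym (negPf n13) eq_sym (negPf n23) eqxx.
    by rewrite eq_sym (negPf n14) eq_sym (negPf n24) eq_sym (negPf n34) eqxx.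
  case: cu => cu1 cu2 cu3 cu4.
  have hc : forall u, u \notin blk u1 u2 u3 u4 -> c u = 0.
    move=> u; rewrite /blk !inE !negb_or => /and4P [a1 a2 a3 a4].
    by rewrite ffunE (negPf a1) (negPf a2) (negPf a3) (negPf a4).
  have hsupp : supp c = blk u1 u2 u3 u4.
    apply/setP => u; rewrite inE.
    have [ub|ub] := boolP (u \in blk u1 u2 u3 u4); last by rewrite hc ?eqxx.
    move: ub; rewrite /blk !inE => /or4P [] /eqP ->; by rewrite ?cu1 ?cu2 ?cu3 ?cu4.
  rewrite inE; apply/existsP; exists c; apply/and3P; split.
  + apply/andP; split; first (apply/andP; split).
    * apply/forallP => u; apply/implyP => hu.
      have : u \notin blk u1 u2 u3 u4.
        apply: contra hu; rewrite /blk !inE => /or4P [] /eqP ->; apply/eqP.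
        - exact: h1.
        - exact: h2.
        - exact: h3.
        - exact: h4.
      by move/hc ->.
    * by apply/(dual_iff h1 h2 h3 h4 n12 n13 n14 n23 n24 n34 hc); rewrite cu1 cu2 cu3 cu4.
    * apply/forallP => u; rewrite ffunE.
      case: ifP => _; first by rewrite f1.
      case: ifP => _; first by rewrite f2.
      case: ifP => _; first by rewrite f3.
      case: ifP => _; first by rewrite f4.
      by rewrite expr0n; case: q hq4.
  + by rewrite hsupp.
  + by rewrite hsupp card_blk.
Qed.

Lemma blocks_ok (b : {set F}) : b \in B4_C35_dual_GFq F q ->
  b \subset Uroots F q /\ #|b| = 4%N.
Proof.
rewrite inE => /existsP [c /and3P [/andP [/andP [hsup _] _] /eqP hb /eqP hcard]].
split; last by rewrite hb.
apply/subsetP => u; rewrite hb inE => cu.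
move/forallP/(_ u): hsup => /implyP hi.
by apply: contraR cu => /hi ->.
Qed.

Lemma count3 (S : {set F}) : S \subset Uroots F q -> #|S| = 3%N ->
  #|[set b in B4_C35_dual_GFq F q | S \subset b]| = 2%N.
Proof.
move=> SU S3.
have [s1 hs1] : exists s1, s1 \in S by apply/card_gt0P; rewrite S3.
have : #|S :\ s1| == 2%N by move: S3; rewrite (cardsD1 s1) hs1 add1n => [[->]].
case/cards2P => s2 [s3 [n23 e23]].
have hS : S = s1 |: (s2 |: [set s3]) by rewrite -e23 setD1K.
have s2in : s2 \in S :\ s1 by rewrite e23 !inE eqxx.
have s3in : s3 \in S :\ s1 by rewrite e23 !inE eqxx orbT.
have n12 : s1 != s2 by move: s2in; rewrite !inE eq_sym => /andP [].
have n13 : s1 != s3 by move: s3in; rewrite !inE eq_sym => /andP [].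
have inU : forall s, s \in S -> s ^+ q.+1 = 1.
  by move=> s /(subsetP SU); rewrite inE => /eqP.
have hu1 := inU s1 hs1.
have hu2 : s2 ^+ q.+1 = 1 by apply: inU; move: s2in; rewrite inE => /andP [].
have hu3 : s3 ^+ q.+1 = 1 by apply: inU; move: s3in; rewrite inE => /andP [].
have hx : forall s : F, s ^+ q.+1 = 1 -> (s ^+ 2) ^+ q.+1 = 1.
  by move=> s hs; rewrite exprAC hs expr1n.
have hx1 := hx s1 hu1; have hx2 := hx s2 hu2; have hx3 := hx s3 hu3.
have m12 := sq_neq n12; have m13 := sq_neq n13; have m23 := sq_neq n23.
have [w [hw hwq]] := exists_omega.
have hw' : (- (1 + w)) ^+ 2 + (- (1 + w)) + 1 = 0 by rewrite -hw; ring.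
have hwq' : (- (1 + w)) ^+ q = - (1 + w) by rewrite frobN frobD expr1n hwq.
set x1 := s1 ^+ 2; set x2 := s2 ^+ 2; set x3 := s3 ^+ 2.
set Y1 := Yr x1 x2 x3 w; set Y2 := Yr x1 x2 x3 (- (1 + w)).
set y1 := sqrtF Y1; set y2 := sqrtF Y2.
have good : forall y, y ^+ q.+1 = 1 -> y \notin S ->
    ((y |: S) \in B4_C35_dual_GFq F q) <-> Qf x1 x2 x3 (y ^+ 2) = 0.
  move=> y hy yS.
  have ny1 : s1 != y by apply: contraNneq yS => <-.
  have ny2 : s2 != y by apply: contraNneq yS => <-; rewrite hS !inE eqxx orbT.
  have ny3 : s3 != y by apply: contraNneq yS => <-; rewrite hS !inE eqxx !orbT.
  have -> : y |: S = blk s1 s2 s3 y.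
    apply/setP => z; rewrite hS /blk !inE.
    by case: (z == y); case: (z == s1); case: (z == s2); case: (z == s3).
  exact: (blkB4 hu1 hu2 hu3 hy n12 n13 ny1 n23 ny2 ny3).
have yprops : forall y, (y ^+ 2 = Y1 \/ y ^+ 2 = Y2) ->
    [/\ y ^+ q.+1 = 1, y \notin S & Qf x1 x2 x3 (y ^+ 2) = 0].
  move=> y hy.
  have hQ : Qf x1 x2 x3 (y ^+ 2) = 0.
    by case: hy => ->; apply: (Yr_root hx1 hx2 hx3 m12 m13 m23).
  have hYU : (y ^+ 2) ^+ q.+1 = 1.
    by case: hy => ->; apply: (Yr_U hx1 hx2 hx3 m12 m13 m23).
  split => //.
    by apply: sq_inj; rewrite expr1n exprAC.
  case: (Qf_ne hx1 hx2 hx3 m12 m13 m23 hQ) => a1 a2 a3.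
  rewrite hS !inE; apply/or3P; case => /eqP e.
  - by move: a1; rewrite e eqxx.
  - by move: a2; rewrite e eqxx.
  - by move: a3; rewrite e eqxx.
have py1 := yprops y1 (or_introl (sqrtFK Y1)).
have py2 := yprops y2 (or_intror (sqrtFK Y2)).
have ny12 : y1 != y2.
  apply/eqP => e; move: (Yr_diff hx1 hx2 hx3 m12 m13 m23 hw hwq).
  by rewrite -/Y1 -/Y2 -(sqrtFK Y1) -(sqrtFK Y2) -/y1 -/y2 e eqxx.
have -> : [set b in B4_C35_dual_GFq F q | S \subset b] = (fun y => y |: S) @: [set y1; y2].
  apply/setP => b; rewrite inE; apply/andP/imsetP.
  - case=> hb SB.
    case: (blocks_ok hb) => bU b4.
    have hd : #|b :\: S| == 1%N.
      by rewrite cardsD (setIidPr SB) b4 S3.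
    case/cards1P: hd => y ey.
    have yb : y \in b :\: S by rewrite ey inE.
    move: (yb); rewrite inE => /andP [yS yb'].
    have hy : y ^+ q.+1 = 1 by move/(subsetP bU): yb'; rewrite inE => /eqP.
    have eb : b = y |: S.
      apply/setP => z; rewrite inE.
      have [zS|zS] := boolP (z \in S); first by rewrite orbT (subsetP SB).
      rewrite orbF; apply/idP/idP.
        move=> zb; have : z \in b :\: S by rewrite inE zS zb.
        by rewrite ey inE.
      by rewrite inE => /eqP ->.
    have hQ : Qf x1 x2 x3 (y ^+ 2) = 0 by apply/(good y hy yS); rewrite -eb.
    exists y; last by [].
    rewrite !inE.
    case: (Qf_roots hx1 hx2 hx3 m12 m13 m23 hw hwq hQ) => e.
      by apply/orP; left; apply/eqP; apply: sq_inj; rewrite e sqrtFK.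
    by apply/orP; right; apply/eqP; apply: sq_inj; rewrite e sqrtFK.
  - case=> y; rewrite !inE => hy ->.
    have [hyU yS hQ] : [/\ y ^+ q.+1 = 1, y \notin S & Qf x1 x2 x3 (y ^+ 2) = 0].
      by case/orP: hy => /eqP ->.
    split; last exact: subsetUr.
    by move: (proj2 (good y hyU yS) hQ); rewrite inE.
rewrite card_in_imset ?cards2 ?ny12 //.
move=> y y'; rewrite !inE => hy hy' e.
have yS : y \notin S by case/orP: hy => /eqP ->; [case: py1 | case: py2].
have : y \in y' |: S by rewrite -e setU11.
by rewrite in_setU (negPf yS) orbF inE => /eqP.
Qed.

Lemma design_q : is_design 3 q.+1 4 2 (Uroots F q) (B4_C35_dual_GFq F q).
Proof.
split; first exact: cardU.
split; first by move=> b /blocks_ok.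
exact: count3.
Qed.

End FF.

Local Close Scope ring_scope.

Lemma pow4_mod3 (k : nat) : exists j, (4 ^ k = 3 * j + 1)%N.
Proof.
elim: k => [|k [j hj]]; first by exists 0%N.
by exists (4 * j + 1)%N; rewrite expnS hj; lia.
Qed.

Theorem theorem27 (m : nat) (F : finFieldType) :
  (4 <= m)%N -> ~~ odd m -> #|F| = ((2 ^ m) ^ 2)%N ->
  is_design 3 (2 ^ m).+1 4 2 (Uroots F (2 ^ m)) (B4_C35_dual_GFq F (2 ^ m)).
Proof.
move=> m4 ev cF.
have ch2 : (2%N \in [pchar F]%R).
  by apply: (@card_finPcharP _ 2 (m * 2)); rewrite // cF expnM.
have qnat : [pchar F]%R.-nat (2 ^ m)%N by rewrite pnatX pnatE // ch2.
have hq4 : (4 <= 2 ^ m)%N by rewrite (_ : 4 = 2 ^ 2)%N // leq_exp2l //; lia.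
have hqr : (2 ^ m = 2 * 2 ^ m.-1)%N by rewrite -expnS prednK //; lia.
have cardF : #|F| = (2 ^ m * 2 ^ m)%N by rewrite cF mulnn.
have hm : m = (m./2 * 2)%N by move: (odd_double_half m); rewrite (negPf ev) add0n -muln2.
have [j hj] := pow4_mod3 m./2.
have hqj : (2 ^ m = 3 * j + 1)%N by rewrite hm mulnC expnM.
exact: (design_q ch2 qnat hq4 hqr cardF hqj).
Qed.
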